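(* Let $\lambda$ and $\mu$ be infinite cardinals with $\mu\leq 2^\lambda$. Then $\mu\not\to_{hc}(\mu)^2_\lambda$: there is a coloring $c:[\mu]^2\to\lambda$ such that for no $\xi<\lambda$ and no $X\subseteq\mu$ with $|X|=\mu$ is the graph $(X,c^{-1}(\xi)\cap[X]^2)$ highly connected.
   Context: $[S]^2$ denotes the set of $2$-element subsets of $S$. A graph $G=(V,E)$ is highly connected if for every $D\subseteq V$ with $|D|<|V|$ the graph induced on $V\setminus D$ is connected. For cardinals $\nu,\mu,\lambda$, $\nu\to_{hc}(\mu)^2_\lambda$ means: for every $c:[\nu]^2\to\lambda$ there exist $\xi<\lambda$ and $X\subseteq\nu$ with $|X|=\mu$ such that $(X,c^{-1}(\xi)\cap[X]^2)$ is highly connected; $\not\to_{hc}$ is its negation. *)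

(* Defs.v *)
(* Cardinals are represented by types (up to equipotence). *)
From Stdlib Require Import Relations.

Definition injective_fn {A B : Type} (f : A -> B) : Prop :=
  forall x y, f x = f y -> x = y.

Definition card_le (A B : Type) : Prop := exists f : A -> B, injective_fn f.

Definition card_lt (A B : Type) : Prop := card_le A B /\ ~ card_le B A.

Definition equipotent (A B : Type) : Prop :=
  exists (f : A -> B) (g : B -> A),
    (forall a, g (f a) = a) /\ (forall b, f (g b) = b).

(* A is infinite (Dedekind / contains a copy of omega) *)
Definition infinite_type (A : Type) : Prop := card_le nat A.

Definition sub {V : Type} (S : V -> Prop) : Type := { v : V | S v }.

Definition connected (V : Type) (E : V -> V -> Prop) : Prop :=
  forall x y : V, clos_refl_trans V E x y.

Definition induced_edges {V : Type} (E : V -> V -> Prop) (S : V -> Prop)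
  : sub S -> sub S -> Prop :=
  fun a b => E (proj1_sig a) (proj1_sig b).

Definition highly_connected (V : Type) (E : V -> V -> Prop) : Prop :=
  forall D : V -> Prop,
    card_lt (sub D) V ->
    connected (sub (fun v => ~ D v)) (induced_edges E (fun v => ~ D v)).

Definition colour_graph {M L : Type} (c : M -> M -> L) (xi : L) (X : M -> Prop)
  : sub X -> sub X -> Prop :=
  fun a b => proj1_sig a <> proj1_sig b /\ c (proj1_sig a) (proj1_sig b) = xi.

(* Main.v *)
Require Import Defs.
From mathcomp Require ssreflect ssrbool eqtype boolp wochoice.
Section S.
Import ssreflect ssrbool eqtype boolp wochoice.
Lemma wo (T : Type) : exists R : T -> T -> Prop,
  (forall x, R x x) /\
  (forall x y, R x y -> R y x -> x = y) /\
  (forall P : T -> Prop, (exists x, P x) -> exists z, P z /\ forall x, P x -> R z x).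
Proof.
have [R wR] := @well_ordering_principle {classic T}.
have minP : forall P : T -> Prop, (exists x, P x) -> exists z, P z /\ forall x, P x -> R z x.
  move=> P [x Px].
  have [z [[zA zlb] _]] := wR [pred y | `[< P y >]] (ex_intro _ x (introT (asboolP _) Px)).
  exists z; split; first by move: zA; rewrite inE => /asboolP.
  move=> y Py; apply: zlb; rewrite inE; exact/asboolP.
have refl : forall x, R x x.
  move=> x; have [z [-> H]] := minP (fun y => y = x) (ex_intro _ x (@Logic.eq_refl _ x)); exact: H.
exists (fun x y => R x y); split; first exact: refl.
split; last exact: minP.
move=> x y Rxy Ryx.
have [|z [_ U]] := wR [pred u | `[< u = x \/ u = y >]].
  by exists x; rewrite inE; apply/asboolP; left.
have ex : minimum_of R [pred u | `[< u = x \/ u = y >]] x.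
  split; first by rewrite inE; apply/asboolP; left.
  by move=> u; rewrite inE => /asboolP [->|->].
have ey : minimum_of R [pred u | `[< u = x \/ u = y >]] y.
  split; first by rewrite inE; apply/asboolP; right.
  by move=> u; rewrite inE => /asboolP [->|->].
by rewrite -(U _ ex) -(U _ ey).
Qed.
End S.
From Stdlib Require Import Classical ClassicalEpsilon ProofIrrelevance FunctionalExtensionality PropExtensionality Lia.

Lemma wo2 (T : Type) : exists R : T -> T -> Prop,
  (forall x, R x x) /\
  (forall x y, R x y -> R y x -> x = y) /\
  (forall x y z, R x y -> R y z -> R x z) /\
  (forall x y, R x y \/ R y x) /\
  (forall P : T -> Prop, (exists x, P x) -> exists z, P z /\ forall x, P x -> R z x).
Proof.
  destruct (wo T) as [R [refl [anti minP]]].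
  exists R. split; [exact refl|]. split; [exact anti|].
  split; [|split; [|exact minP]].
  - intros x y z Hxy Hyz.
    destruct (minP (fun u => u = x \/ u = y \/ u = z)) as [m [Hm Hmin]].
    { exists x; auto. }
    destruct Hm as [Hm|[Hm|Hm]]; subst m.
    + apply Hmin; auto.
    + assert (x = y) by (apply anti; [exact Hxy| apply Hmin; auto]). subst; auto.
    + assert (y = z) by (apply anti; [exact Hyz| apply Hmin; auto]). subst; auto.
  - intros x y.
    destruct (minP (fun u => u = x \/ u = y)) as [m [Hm Hmin]].
    { exists x; auto. }
    destruct Hm as [Hm|Hm]; subst m; [left|right]; apply Hmin; auto.
Qed.

Lemma sub_inj {V : Type} (S : V -> Prop) (a b : sub S) :
  proj1_sig a = proj1_sig b -> a = b.
Proof.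
  destruct a as [a pa]; destruct b as [b pb]; simpl; intros Hab; subst b.
  f_equal; apply proof_irrelevance.
Qed.

Lemma shift (T : Type) (e : nat -> T) (he : injective_fn e) (p : T) :
  exists s : T -> T, injective_fn s /\ forall m, s m <> p.
Proof.
  set (t := fun m => match excluded_middle_informative (exists n, m = e n) with
                     | left H => e (S (proj1_sig (constructive_indefinite_description _ H)))
                     | right _ => m end).
  assert (tinj : injective_fn t).
  { intros m1 m2. unfold t.
    destruct (excluded_middle_informative (exists n, m1 = e n)) as [H1|H1];
    destruct (excluded_middle_informative (exists n, m2 = e n)) as [H2|H2].
    - destruct (constructive_indefinite_description _ H1) as [n1 E1].
      destruct (constructive_indefinite_description _ H2) as [n2 E2]. simpl.
      intros Heq. apply he in Heq. injection Heq; intros ->. congruence.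
    - intros Heq. exfalso. apply H2. eauto.
    - intros Heq. exfalso. apply H1. eauto.
    - auto. }
  assert (tne : forall m, t m <> e 0).
  { intros m. unfold t.
    destruct (excluded_middle_informative (exists n, m = e n)) as [H1|H1].
    - destruct (constructive_indefinite_description _ H1) as [n1 E1]. simpl.
      intros Heq. apply he in Heq. discriminate.
    - intros Hm. apply H1. eauto. }
  set (tau := fun m => if excluded_middle_informative (m = e 0) then p
                       else if excluded_middle_informative (m = p) then e 0 else m).
  assert (tautau : forall m, tau (tau m) = m).
  { intros m. unfold tau.
    destruct (excluded_middle_informative (m = e 0)) as [A|A];
    destruct (excluded_middle_informative (m = p)) as [B|B];
    repeat match goal with
    | |- context [excluded_middle_informative ?P] =>
        destruct (excluded_middle_informative P) end; congruence. }
  exists (fun m => tau (t m)). split.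
  - intros x y H. apply tinj. rewrite <- (tautau (t x)), <- (tautau (t y)). congruence.
  - intros m. unfold tau. specialize (tne m).
    destruct (excluded_middle_informative (t m = e 0)); [congruence|].
    destruct (excluded_middle_informative (t m = p)); congruence.
Qed.

Lemma plus (T : Type) (iT : infinite_type T) (Q : T -> Prop) (y : T) :
  card_le T (sub (fun x => Q x \/ x = y)) -> card_le T (sub Q).
Proof.
  intros [g hg].
  assert (Hs : exists s : T -> T, injective_fn s /\ forall m, proj1_sig (g (s m)) <> y).
  { destruct (classic (exists p, proj1_sig (g p) = y)) as [[p Hp]|Hn].
    - destruct iT as [e he].
      destruct (shift T e he p) as [s [hs hsp]].
      exists s. split; [exact hs|]. intros m Hm. apply (hsp m). apply hg.
      apply sub_inj. congruence.
    - exists (fun m => m). split; [intros a b; auto|]. intros m Hm. apply Hn. eauto. }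
  destruct Hs as [s [hs hsy]].
  assert (HQ : forall m, Q (proj1_sig (g (s m)))).
  { intros m. destruct (proj2_sig (g (s m))) as [H|H]; [exact H|]. exfalso; exact (hsy m H). }
  exists (fun m => exist Q (proj1_sig (g (s m))) (HQ m)).
  intros a b H. apply hs, hg. apply sub_inj.
  apply (f_equal (@proj1_sig _ _)) in H. exact H.
Qed.

Lemma good_order (T : Type) : infinite_type T -> exists lt : T -> T -> Prop,
  (forall x, ~ lt x x) /\
  (forall x y z, lt x y -> lt y z -> lt x z) /\
  (forall x y, x <> y -> lt x y \/ lt y x) /\
  (forall P : T -> Prop, (exists x, P x) -> exists z, P z /\ forall x, P x -> ~ lt x z) /\
  (forall y, ~ card_le T (sub (fun x => lt x y \/ x = y))).
Proof.
  intros iT.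
  destruct (wo2 T) as [R [refl [anti [trans [total minP]]]]].
  set (S := fun x y => R x y /\ x <> y).
  assert (Strans : forall x y z, S x y -> S y z -> S x z).
  { intros x y z [H1 H2] [H3 H4]. split; [eauto|].
    intros Hxz; subst z. apply H2. apply anti; auto. }
  assert (G : forall h : T -> T, injective_fn h ->
            (forall y, ~ card_le T (sub (fun x => S x (h y)))) ->
    exists lt : T -> T -> Prop,
  (forall x, ~ lt x x) /\
  (forall x y z, lt x y -> lt y z -> lt x z) /\
  (forall x y, x <> y -> lt x y \/ lt y x) /\
  (forall P : T -> Prop, (exists x, P x) -> exists z, P z /\ forall x, P x -> ~ lt x z) /\
  (forall y, ~ card_le T (sub (fun x => lt x y \/ x = y)))).
  { intros h hh hbad. exists (fun x y => S (h x) (h y)).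
    split; [intros x [_ H]; auto|].
    split; [intros x y z; apply Strans|].
    split.
    { intros x y Hxy. assert (h x <> h y) by (intro E; apply Hxy, hh, E).
      destruct (total (h x) (h y)); [left|right]; split; auto. }
    split.
    { intros P [x Px].
      destruct (minP (fun u => exists x, P x /\ h x = u)) as [u [[x0 [Px0 Hx0]] Hmin]].
      { exists (h x); eauto. }
      exists x0; split; [exact Px0|]. intros x1 Px1 [H1 H2].
      apply H2. apply anti; [exact H1|]. subst u. apply Hmin; eauto. }
    intros y Hc. apply plus in Hc; [|exact iT]. destruct Hc as [g hg].
    apply (hbad y).
    exists (fun m => exist (fun x => S x (h y)) (h (proj1_sig (g m))) (proj2_sig (g m))).
    intros a b E. apply hg, sub_inj, hh.
    apply (f_equal (@proj1_sig _ _)) in E. exact E. }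
  destruct (classic (exists v, card_le T (sub (fun x => S x v)))) as [Hb|Hb].
  - destruct (minP _ Hb) as [v0 [[h0 hh0] Hmin]].
    apply (G (fun x => proj1_sig (h0 x))).
    + intros a b E. apply hh0, sub_inj, E.
    + intros y Hy. pose proof (Hmin _ Hy) as H1.
      destruct (proj2_sig (h0 y)) as [H2 H3]. apply H3. apply anti; auto.
  - apply (G (fun x => x)); [intros a b; auto|].
    intros y Hy. apply Hb. eauto.
Qed.

Lemma double (L : Type) : infinite_type L ->
  exists enc : L -> bool -> L, forall l b l' b', enc l b = enc l' b' -> l = l' /\ b = b'.
Proof.
  intros iL.
  destruct (good_order L iL) as [lt [irr [trans [total [minP bnd]]]]].
  assert (nomax : forall y, exists z, lt y z).
  { intros y. apply NNPP. intros Hn.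
    assert (H : forall x, lt x y \/ x = y).
    { intros x. destruct (classic (x = y)) as [E|E]; [right; exact E|].
      destruct (total x y E) as [H|H]; [left; exact H|]. exfalso; eauto. }
    apply (bnd y). exists (fun x => exist _ x (H x)).
    intros a b E. apply (f_equal (@proj1_sig _ _)) in E. exact E. }
  assert (sdef : forall y, {z | lt y z /\ forall w, lt y w -> ~ lt w z}).
  { intros y. apply constructive_indefinite_description.
    destruct (minP (fun z => lt y z) (nomax y)) as [z [H1 H2]]. eauto. }
  set (s := fun y => proj1_sig (sdef y)).
  assert (sgt : forall y, lt y (s y)) by (intros y; exact (proj1 (proj2_sig (sdef y)))).
  assert (smin : forall y w, lt y w -> ~ lt w (s y)) by (intros y; exact (proj2 (proj2_sig (sdef y)))).
  assert (sinj : forall y y', s y = s y' -> y = y').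
  { intros y y' E. apply NNPP. intros Hne.
    destruct (total y y' Hne) as [H|H].
    - apply (smin y y' H). rewrite E. apply sgt.
    - apply (smin y' y H). rewrite <- E. apply sgt. }
  set (lim := fun x => forall y, s y <> x).
  assert (ex : forall x, exists p : L * nat, lim (fst p) /\ x = Nat.iter (snd p) s (fst p)).
  { apply NNPP. intros Hn. apply not_all_ex_not in Hn.
    destruct (minP _ Hn) as [x0 [Hx0 Hmin]].
    destruct (classic (lim x0)) as [Hl|Hl].
    - apply Hx0. exists (x0, 0). simpl. auto.
    - unfold lim in Hl. apply not_all_ex_not in Hl. destruct Hl as [y Hy].
      apply NNPP in Hy.
      assert (Hy2 : exists p : L * nat, lim (fst p) /\ y = Nat.iter (snd p) s (fst p)).
      { apply NNPP. intros Hp. apply (Hmin y Hp). rewrite <- Hy. apply sgt. }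
      destruct Hy2 as [[a n] [Ha Hn']]. simpl in *.
      apply Hx0. exists (a, S n). simpl. split; [exact Ha|]. rewrite <- Hy, Hn'. reflexivity. }
  assert (uniq : forall n m a b, lim a -> lim b -> Nat.iter n s a = Nat.iter m s b -> n = m /\ a = b).
  { induction n as [|n IH]; intros m a b Ha Hb E; destruct m as [|m]; simpl in E.
    - auto.
    - exfalso. exact (Ha _ (eq_sym E)).
    - exfalso. exact (Hb _ E).
    - apply sinj in E. destruct (IH m a b Ha Hb E). auto. }
  set (dec := fun l => proj1_sig (constructive_indefinite_description _ (ex l))).
  assert (decP : forall l, lim (fst (dec l)) /\ l = Nat.iter (snd (dec l)) s (fst (dec l))).
  { intros l. exact (proj2_sig (constructive_indefinite_description _ (ex l))). }
  exists (fun l (b : bool) => Nat.iter (2 * snd (dec l) + (if b then 1 else 0)) s (fst (dec l))).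
  intros l b l' b' E.
  destruct (decP l) as [H1 H2]. destruct (decP l') as [H1' H2'].
  destruct (uniq _ _ _ _ H1 H1' E) as [En Ea].
  assert (snd (dec l) = snd (dec l') /\ b = b') as [Hn Hb].
  { destruct b, b'; split; auto; lia. }
  split; [|exact Hb]. rewrite H2, H2', Hn, Ea. reflexivity.
Qed.

Theorem mainTheorem4 (L M : Type) :
  infinite_type L -> infinite_type M ->
  card_le M (L -> Prop) ->
  exists c : M -> M -> L,
    (forall x y : M, c x y = c y x) /\
    forall (xi : L) (X : M -> Prop),
      equipotent (sub X) M ->
      ~ highly_connected (sub X) (colour_graph c xi X).
Proof.
  intros iL iM [f hf].
  destruct (good_order M iM) as [lt [irr [trans [total [_ bnd]]]]].
  destruct (double L iL) as [enc henc].
  destruct iL as [eL heL].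
  assert (Hdd : forall x y, exists l, x <> y -> ~ (f x l <-> f y l)).
  { intros x y. destruct (classic (x = y)) as [E|E]; [exists (eL 0); tauto|].
    apply NNPP. intros Hn. apply E, hf.
    apply functional_extensionality. intros l. apply propositional_extensionality.
    apply NNPP. intros Hl. apply Hn. exists l. intros _. exact Hl. }
  set (dd := fun x y => proj1_sig (constructive_indefinite_description _ (Hdd x y))).
  assert (ddP : forall x y, x <> y -> ~ (f x (dd x y) <-> f y (dd x y))).
  { intros x y. exact (proj2_sig (constructive_indefinite_description _ (Hdd x y))). }
  set (bit := fun P : Prop => if excluded_middle_informative P then true else false).
  assert (bitE : forall P Q : Prop, bit P = bit Q -> (P <-> Q)).
  { intros P Q. unfold bit.
    destruct (excluded_middle_informative P), (excluded_middle_informative Q);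
      intros H; try discriminate; tauto. }
  set (col := fun x y => enc (dd x y) (bit (f x (dd x y)))).
  set (c := fun x y => if excluded_middle_informative (lt x y) then col x y else col y x).
  assert (asym : forall x y, lt x y -> ~ lt y x) by (intros x y H1 H2; exact (irr x (trans _ _ _ H1 H2))).
  assert (cE : forall x y, lt x y -> c x y = col x y).
  { intros x y H. unfold c. destruct (excluded_middle_informative (lt x y)); tauto. }
  assert (csym : forall x y, c x y = c y x).
  { intros x y. destruct (classic (x = y)) as [E|E]; [subst; reflexivity|].
    destruct (total x y E) as [H|H].
    - transitivity (col x y); [apply cE; exact H|]. unfold c. destruct (excluded_middle_informative (lt y x)) as [Hl|Hl]; [exfalso; exact (asym _ _ H Hl)|reflexivity].
    - transitivity (col y x); [|symmetry; apply cE; exact H]. unfold c. destruct (excluded_middle_informative (lt x y)) as [Hl|Hl]; [exfalso; exact (asym _ _ H Hl)|reflexivity]. }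
  assert (key : forall a b e, lt a b -> lt b e -> c a b = c b e -> False).
  { intros a b e H1 H2 E. rewrite (cE _ _ H1), (cE _ _ H2) in E. unfold col in E.
    apply henc in E. destruct E as [E1 E2].
    apply (ddP a b).
    - intro; subst; exact (irr _ H1).
    - apply bitE. rewrite E2. rewrite E1. reflexivity. }
  exists c. split; [exact csym|].
  intros xi X [g [g' [Hgg' Hg'g]]] H.
  assert (g'inj : injective_fn g').
  { intros a b E. rewrite <- (Hg'g a), <- (Hg'g b), E. reflexivity. }
  destruct iM as [eM heM].
  destruct (classic (exists u v : sub X, colour_graph c xi X u v)) as [Hed|Hed].
  -
    assert (Hab : exists a b, X a /\ X b /\ lt a b /\ c a b = xi).
    { destruct Hed as [[u Xu] [[v Xv] [Huv Hc]]]. simpl in *.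
      destruct (total u v Huv) as [Hl|Hl].
      - exists u, v. auto.
      - exists v, u. rewrite csym. auto. }
    destruct Hab as [a [b [Xa [Xb [Hlt Hc]]]]].
    set (D := fun w : sub X => lt (proj1_sig w) b).
    assert (Hsmall : card_lt (sub D) (sub X)).
    { split.
      - exists (fun p => proj1_sig p). intros p q E. apply sub_inj, E.
      - intros [h hh]. apply (bnd b).
        exists (fun m => exist (fun x => lt x b \/ x = b) (proj1_sig (proj1_sig (h (g' m))))
                          (or_introl (proj2_sig (h (g' m))))).
        intros m1 m2 E. apply (f_equal (@proj1_sig _ _)) in E. simpl in E.
        apply g'inj, hh, sub_inj, sub_inj, E. }
    assert (Hw : exists w : sub X, ~ D w /\ proj1_sig w <> b).
    { apply NNPP. intros Hn. apply (bnd b).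
      assert (HH : forall m, lt (proj1_sig (g' m)) b \/ proj1_sig (g' m) = b).
      { intros m. destruct (classic (D (g' m))) as [Hd|Hd]; [left; exact Hd|].
        right. apply NNPP. intros Hne. apply Hn. exists (g' m). auto. }
      exists (fun m => exist _ (proj1_sig (g' m)) (HH m)).
      intros m1 m2 E. apply (f_equal (@proj1_sig _ _)) in E. simpl in E.
      apply g'inj, sub_inj, E. }
    destruct Hw as [w [Dw Hwb]].
    specialize (H D Hsmall).
    set (bb := exist X b Xb).
    assert (Dbb : ~ D bb) by (unfold D; simpl; apply irr).
    pose proof (H (exist _ bb Dbb) (exist _ w Dw)) as Hconn.
    assert (inv : forall p q, Relation_Operators.clos_refl_trans _
              (induced_edges (colour_graph c xi X) (fun v => ~ D v)) p q ->
              proj1_sig (proj1_sig p) = b -> proj1_sig (proj1_sig q) = b).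
    { intros p q Hpq. induction Hpq as [p q Hst| p | p q r _ IH1 _ IH2].
      - intros Hp. exfalso.
        destruct Hst as [Hne Hcq]. rewrite Hp in Hne, Hcq.
        destruct (total _ _ Hne) as [Hl|Hl].
        + apply (key a b _ Hlt Hl). rewrite Hc, Hcq. reflexivity.
        + apply (proj2_sig q). exact Hl.
      - auto.
      - auto. }
    apply Hwb. exact (inv _ _ Hconn eq_refl).
  -
    set (D := fun _ : sub X => False).
    assert (Hsmall : card_lt (sub D) (sub X)).
    { split.
      - exists (fun p => False_rect (sub X) (proj2_sig p)). intros p. exfalso; exact (proj2_sig p).
      - intros [h _]. exact (proj2_sig (h (g' (eM 0)))). }
    specialize (H D Hsmall).
    pose proof (H (exist _ (g' (eM 0)) (fun z => z)) (exist _ (g' (eM 1)) (fun z => z))) as Hconn.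
    assert (inv : forall p q, Relation_Operators.clos_refl_trans _
              (induced_edges (colour_graph c xi X) (fun v => ~ D v)) p q -> p = q).
    { intros p q Hpq. induction Hpq as [p q Hst| p | p q r _ IH1 _ IH2].
      - exfalso. apply Hed. exists (proj1_sig p), (proj1_sig q). exact Hst.
      - reflexivity.
      - congruence. }
    apply inv in Hconn. apply (f_equal (@proj1_sig _ _)) in Hconn. simpl in Hconn.
    apply g'inj, heM in Hconn. discriminate.
Qed.
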